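(* Let $n\in\mathbb{N}$, $0<\beta\le n$, and let $B$ be a Young function with complementary Young function $\bar B$. Then there is a constant $C_\beta>0$ such that for all functions $f,g$ and all cubes $Q$, \[ \frac{1}{\ell(Q)^\beta}\int_Q|fg|\,d\mathcal{H}^\beta_\infty\le C_\beta\|f\|_{B,Q,\mathcal{H}^\beta_\infty}\|g\|_{\bar B,Q,\mathcal{H}^\beta_\infty}. \]
   Context: $\mathcal{H}^\beta_\infty(E)=\inf\{\sum_i\omega_\beta r_i^\beta:E\subset\bigcup_iB(x_i,r_i)\}$, $\omega_\beta=\pi^{\beta/2}/\Gamma(\beta/2+1)$; integrals against $\mathcal{H}^\beta_\infty$ are Choquet integrals $\int_\Omega h\,d\mathcal{H}^\beta_\infty=\int_0^\infty\mathcal{H}^\beta_\infty(\{x\in\Omega:h>t\})\,dt$. Cubes are axis-parallel with side length $\ell(Q)$. A Young function $B:[0,\infty)\to[0,\infty)$ is continuous, convex, strictly increasing, with $B(0)=0$ and $B(t)\to\infty$ as $t\to\infty$; its complementary function is $\bar B(t)=\sup_{s>0}\{st-B(s)\}$. The mean Luxemburg quasinorm is $\|f\|_{B,Q,\mathcal{H}^\beta_\infty}=\inf\{\lambda>0:\ell(Q)^{-\beta}\int_QB(|f|/\lambda)\,d\mathcal{H}^\beta_\infty\le1\}$. *)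

(* Defs.v *)
From HB Require Import structures.
From mathcomp Require Import all_boot all_order all_algebra.
From mathcomp Require Import all_classical all_reals all_analysis.
Set Implicit Arguments. Unset Strict Implicit. Unset Printing Implicit Defensive.
Import Order.TTheory GRing.Theory Num.Theory.
Import numFieldNormedType.Exports.
Local Open Scope classical_set_scope.
Local Open Scope ring_scope.

Definition Gamma (R : realType) (s : R) : R :=
  fine (\int[lebesgue_measure]_(t in `]0%R, +oo[) ((powR t (s - 1)) * expR (- t))%:E)%E.

Definition omega (R : realType) (beta : R) : R :=
  powR pi (beta / 2) / Gamma (beta / 2 + 1).

Definition edist (R : realType) (n : nat) (x y : 'rV[R]_n) : R :=
  Num.sqrt (\sum_(i < n) (x ord0 i - y ord0 i) ^+ 2).

Definition eball (R : realType) (n : nat) (x : 'rV[R]_n) (r : R) : set 'rV[R]_n :=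
  [set y | edist x y <= r].

Definition hcontent (R : realType) (n : nat) (beta : R) (E : set 'rV[R]_n) : \bar R :=
  ereal_inf [set S : \bar R | exists (x : nat -> 'rV[R]_n) (r : nat -> R),
     (forall i, 0 <= r i) /\ E `<=` \bigcup_i eball (x i) (r i) /\
     S = (\sum_(0 <= i <oo) (omega beta * powR (r i) beta)%:E)%E].

Definition choquet (R : realType) (n : nat) (beta : R) (Omega : set 'rV[R]_n)
    (h : 'rV[R]_n -> \bar R) : \bar R :=
  (\int[lebesgue_measure]_(t in `[0%R, +oo[)
      hcontent beta [set x | Omega x /\ (t%:E < h x)%E])%E.

Definition cube (R : realType) (n : nat) (a : 'rV[R]_n) (l : R) : set 'rV[R]_n :=
  [set x | forall i : 'I_n, a ord0 i <= x ord0 i <= a ord0 i + l].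

(* Young function B : [0,oo) -> [0,oo) (only its values on [0,oo) matter) *)
Definition young (R : realType) (B : R -> R) : Prop :=
  [/\ B 0 = 0,
      {within `[0, +oo[, continuous B},
      (forall x y t, 0 <= x -> 0 <= y -> 0 <= t <= 1 ->
          B (t * x + (1 - t) * y) <= t * B x + (1 - t) * B y),
      (forall x y, 0 <= x -> x < y -> B x < B y) &
      B t @[t --> +oo] --> +oo].

Definition compl (R : realType) (B : R -> R) (t : R) : \bar R :=
  ereal_sup [set ((s * t - B s)%:E) | s in [set s : R | 0 < s]].

(* mean Luxemburg quasinorm ||f||_{Phi,Q,H^beta_infty} for cube Q = cube a l *)
Definition lux (R : realType) (n : nat) (beta : R) (Phi : R -> \bar R)
    (f : 'rV[R]_n -> R) (a : 'rV[R]_n) (l : R) : \bar R :=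
  ereal_inf [set lam%:E | lam in [set lam : R | 0 < lam /\
     ((powR l beta)^-1%:E * choquet beta (cube a l) (fun x => Phi (`|f x| / lam)%R) <= 1)%E]].

(* Main.v *)
Require Import Defs.
From HB Require Import structures.
From mathcomp Require Import all_boot all_order all_algebra.
From mathcomp Require Import all_classical all_reals all_analysis.
From mathcomp Require Import measurable_realfun.
From mathcomp Require Import ring lra.
Set Implicit Arguments. Unset Strict Implicit. Unset Printing Implicit Defensive.
Import Order.TTheory GRing.Theory Num.Theory.
Import numFieldNormedType.Exports.
Local Open Scope classical_set_scope.
Local Open Scope ring_scope.
Section hc.
Context (R : realType) (n : nat) (beta : R) (hb : 0 < beta).
Local Open Scope ereal_scope.
Local Notation H := (@hcontent R n beta).

Lemma omega_ge0 : (0 <= omega beta)%R.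
Proof.
rewrite /omega divr_ge0 ?powR_ge0 // /Gamma fine_ge0 // integral_ge0 // => t _.
by rewrite lee_fin mulr_ge0 ?powR_ge0 ?expR_ge0.
Qed.

Lemma hc_ge0 E : 0 <= H E.
Proof.
apply: le_ereal_inf_tmp => _ [x [r [r0 [_ ->]]]].
by apply: nneseries_ge0 => i _ _; rewrite lee_fin mulr_ge0 ?omega_ge0 ?powR_ge0.
Qed.

Lemma hc0 : H set0 = 0.
Proof.
apply/eqP; rewrite eq_le hc_ge0 andbT.
apply: ereal_inf_lbound; exists (fun=> 0%R), (fun=> 0%R); split => //; split => //.
by rewrite eseries0 // => i _ _; rewrite powR0 ?mulr0 // gt_eqF.
Qed.

Lemma le_hc A B : A `<=` B -> H A <= H B.
Proof.
move=> AB; apply: ereal_inf_le_tmp => _ [x [r [r0 [Bc ->]]]].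
by exists x, r; split => //; split => //; apply: subset_trans AB Bc.
Qed.
End hc.
Section hc2.
Context (R : realType) (n : nat) (beta : R) (hb : 0 < beta).
Local Open Scope ereal_scope.
Local Notation H := (@hcontent R n beta).

Lemma hc_sigma_sub : sigma_subadditive H.
Proof.
move=> A; have [[i ioo]|] := pselect (exists i, H (A i) = +oo).
  rewrite (eseries_pinfty _ _ ioo) ?leey// => k _.
  by rewrite -ltNye (lt_le_trans _ (hc_ge0 _ _))//.
rewrite -forallNE => Aoo.
suff add2e (e : {posnum R}) :
    H (\bigcup_k A k) <= \sum_(i <oo) H (A i) + e%:num%:E.
  by apply/lee_addgt0Pr => _/posnumP[].
rewrite (le_trans _ (epsilon_trick _ _ _))//; last by move=> k; exact: hc_ge0.
pose cost (p : 'rV[R]_n * R) := (omega beta * powR p.2 beta)%:E.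
have cost0 p : 0 <= cost p by rewrite lee_fin mulr_ge0 ?omega_ge0 ?powR_ge0.
pose P k (G : nat -> 'rV[R]_n * R) := [/\ (forall i, (0 <= (G i).2)%R),
  A k `<=` \bigcup_i eball (G i).1 (G i).2 &
  \sum_(i <oo) cost (G i) <= H (A k) + (e%:num / (2 ^ k.+1)%:R)%:E].
have [G PG] : {G : (nat -> 'rV[R]_n * R)^nat & forall k, P k (G k)}.
  apply: (@choice _ _ P) => k; rewrite /P /hcontent.
  set S := (X in ereal_inf X); move infS : (ereal_inf S) => iS.
  case: iS infS => [r Sr|Soo|Soo].
  - have en1 : (0 < e%:num / (2 ^ k.+1)%:R)%R by [].
    have /(lb_ereal_inf_adherent en1) : ereal_inf S \is a fin_num by rewrite Sr.
    move=> [y [x [r' [r0 [Acov ->]]]]] yS.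
    by exists (fun i => (x i, r' i)); split => //; rewrite -Sr; exact/ltW.
  - by have := Aoo k; rewrite /hcontent -/S Soo.
  - suff : lbound S 0 by move/le_ereal_inf_tmp; rewrite Soo.
    move=> /= _ [x [r [r0 [_ ->]]]].
    by apply: nneseries_ge0 => i _ _; exact: (cost0 (x i, r i)).
apply: (@le_trans _ _ (\esum_(i in setT) (cost \o uncurry G) i)).
  have /card_esym/ppcard_eqP[f] := card_nat2.
  apply: ereal_inf_lbound => /=.
  exists (fun i => (uncurry G (f i)).1), (fun i => (uncurry G (f i)).2).
  split; first by move=> i; case: (PG (f i).1) => + _ _; rewrite /uncurry; case: (f i).
  split.
    move=> t [i _] Ait; case: (PG i) => _ /(_ t Ait) [j _ Hj] _.
    exists (f^-1%FUN (i, j)) => //=; by rewrite invK ?inE.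
  rewrite -(esum_pred_image (cost \o uncurry G) _ xpredT) ?[fun=> _]set_true//.
    congr esum; apply/seteqP; split => // -[i j] _.
    by exists (f^-1%FUN (i, j)) => //; rewrite invK ?inE.
  by move=> k _; exact: cost0.
rewrite (_ : esum _ _ = \sum_(i <oo) \sum_(j <oo ) cost (G i j)); last first.
  pose J : nat -> set (nat * nat) := fun i => [set (i, j) | j in setT].
  rewrite (_ : setT = \bigcup_k J k); last first.
    by rewrite predeqE => -[a b]; split => // _; exists a => //; exists b.
  rewrite esum_bigcupT /=; last 2 first.
    - apply/trivIsetP => i j _ _ ij.
      rewrite predeqE => -[k m] /=; split => //= -[] [_] _ [<-{k} _].
      by move=> [m' _] [] /esym/eqP; rewrite (negbTE ij).
    - by move=> /= [k m]; exact: cost0.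
  rewrite -(image_id [set: nat]) -fun_true esum_pred_image//; last first.
    by move=> k _; exact: esum_ge0.
  apply: eq_eseriesr => /= j _.
  rewrite -(esum_pred_image (cost \o uncurry G) (pair j) predT)//=; last first.
    by move=> ? ? _ _; exact: (@can_inj _ _ _ snd).
  by congr esum; rewrite predeqE => -[a b]; split; move=> [i _ <-]; exists i.
apply: lee_lim.
- apply: is_cvg_nneseries => k *.
  by apply: nneseries_ge0 => m *; exact: cost0.
- by apply: is_cvg_nneseries => k *; apply: adde_ge0 => //; exact: hc_ge0.
- by near=> k; apply: lee_sum => i _; case: (PG i).
Unshelve. all: by end_near. Qed.

End hc2.

Section hc3.
Context (R : realType) (n : nat) (beta : R) (hb : 0 < beta).
Local Open Scope ereal_scope.
Local Notation H := (@hcontent R n beta).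

Definition hc_om : {outer_measure set 'rV[R]_n -> \bar R} :=
  HB.pack H (isOuterMeasure.Build R _ H (@hc0 R n beta hb) (@hc_ge0 R n beta) (@le_hc R n beta)
    (@hc_sigma_sub R n beta)).

Lemma hcU2 A B : H (A `|` B) <= H A + H B.
Proof. exact: (outer_measureU2 hc_om). Qed.

Lemma hc_bigcup0 (A : (set 'rV[R]_n)^nat) : (forall k, H (A k) = 0) ->
  H (\bigcup_k A k) = 0.
Proof.
move=> A0; apply/eqP; rewrite eq_le hc_ge0 andbT.
apply: le_trans (@hc_sigma_sub R n beta A) _.
by rewrite eseries0.
Qed.
End hc3.
Section scal.
Context (R : realType).
Local Open Scope ereal_scope.
Local Notation mu := (@lebesgue_measure R).

Lemma nonincr_emeas (phi : R -> \bar R) :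
  (forall s t : R, (s <= t)%R -> phi t <= phi s) -> measurable_fun [set: R] phi.
Proof.
move=> ni; apply: (measurability _ (ErealGenOInfty.measurableE R)) => //.
move=> /= _ [_ [a ->]] <-; apply: measurableI => //.
apply: is_interval_measurable => x y /= + + z /andP[xz zy].
rewrite !in_itv /= !andbT => _ ay.
exact: (lt_le_trans ay (ni _ _ zy)).
Qed.

Lemma scale_integral (psi : R -> \bar R) (c : R) : (0 < c)%R ->
  measurable_fun setT psi -> (forall t, 0 <= psi t) ->
  \int[mu]_(t in `[0%R, +oo[) psi t =
  c%:E * \int[mu]_(t in `[0%R, +oo[) psi (c * t)%R.
Proof.
move=> c0 mpsi psi0.
have mphi : measurable_fun [set: R] (fun t : R => c * t)%R.
  by apply: measurable_funM => //; exact: measurable_id.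
pose k : {nonneg R} := NngNum (ltW c0).
pose phi := (fun t : measurableTypeR R => (c * t)%R : measurableTypeR R).
have mphi' : measurable_fun [set: measurableTypeR R] phi by exact: mphi.
pose pm := measure_function_pushforward__canonical__measure_function_Measure mu mphi'.
have E : forall A, measurable A -> mu A = mscale k pm A.
  apply: (@lebesgue_measure_unique R (mscale k pm)) => _ [[a b] _ <-] /=.
  rewrite /mscale /pushforward /=.
  change (mu `]a, b] = c%:E * mu (phi @^-1` `]a, b])).
  rewrite /phi.
  have -> : (fun t : measurableTypeR R => (c * t)%R : measurableTypeR R) @^-1` `]a, b]%classic = `](a / c)%R, (b / c)%R]%classic.
    apply/seteqP; split => t /=; rewrite !in_itv /=.
      by move=> /andP[ha hb]; rewrite ltr_pdivrMr // ler_pdivlMr // ![(t * c)%R]mulrC ha hb.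
    by move=> /andP[ha hb]; rewrite -ltr_pdivrMl // -ler_pdivlMl // ![(c^-1 * _)%R]mulrC ha hb.
  rewrite !lebesgue_measure_itv /= !lte_fin ltr_pM2r ?invr_gt0 //.
  case: ifPn => // _; last by rewrite mule0.
  by rewrite -EFinD -EFinM; congr EFin; rewrite -mulrBl mulrCA divff ?gt_eqF // mulr1.
rewrite (eq_measure_integral (mscale k pm)); last by move=> A mA _; exact: E.
rewrite ge0_integral_mscale //; last exact: measurable_funS mpsi.
congr (_ * _)%E.
rewrite ge0_integral_pushforward //.
have -> : phi @^-1` `[0%R, +oo[%classic = `[0%R, +oo[%classic.
  apply/seteqP; split => t /=; rewrite !in_itv /= !andbT.
    by rewrite pmulr_rge0.
  by move=> t0; rewrite mulr_ge0 // ltW.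
by [].
exact: measurable_funS mpsi.
Qed.
End scal.
Section choq.
Context (R : realType) (n : nat) (beta : R) (hb : 0 < beta).
Local Notation H := (@hcontent R n beta).
Local Notation mu := (@lebesgue_measure R).

Definition lvl (Om : set 'rV[R]_n) (h : 'rV[R]_n -> \bar R) (t : R) :=
  [set x | Om x /\ (t%:E < h x)%E].

Lemma lvl_ni Om h s t : s <= t -> lvl Om h t `<=` lvl Om h s.
Proof. by move=> st x [Ox ht]; split => //; apply: le_lt_trans ht; rewrite lee_fin. Qed.

Lemma lvl_meas Om h (k : R) : 0 < k ->
  measurable_fun [set: R] (fun t => H (lvl Om h (t / k))).
Proof.
move=> k0; apply: nonincr_emeas => s t st; apply: le_hc; apply: lvl_ni.
by rewrite ler_pM2r ?invr_gt0.
Qed.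

Lemma ch_ge0 (Om : set 'rV[R]_n) h : (0 <= choquet beta Om h)%E.
Proof. by apply: integral_ge0 => t _; exact: hc_ge0. Qed.

Lemma ch_scale Om h (k : R) : 0 < k ->
  (\int[mu]_(t in `[0%R, +oo[) H (lvl Om h (t / k)) = k%:E * choquet beta Om h)%E.
Proof.
move=> k0; rewrite (scale_integral k0) //; last 2 first.
- exact: lvl_meas.
- by move=> t; exact: hc_ge0.
congr (_ * _)%E; apply: eq_integral => t _.
by rewrite [k * t]mulrC mulfK ?gt_eqF.
Qed.

Lemma ch_key (Om : set 'rV[R]_n) (h h1 h2 : 'rV[R]_n -> \bar R) (k : R) : 0 < k ->
  (forall t x, 0 <= t -> Om x -> (t%:E < h x)%E ->
     ((t / k)%:E < h1 x)%E \/ ((t / k)%:E < h2 x)%E) ->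
  (choquet beta Om h <= k%:E * (choquet beta Om h1 + choquet beta Om h2))%E.
Proof.
move=> k0 hinc; rewrite /choquet.
apply: (@le_trans _ _ (\int[mu]_(t in `[0%R, +oo[)
    (H (lvl Om h1 (t / k)) + H (lvl Om h2 (t / k))))%E).
  apply: ge0_le_integral => //.
  - by move=> t _; exact: hc_ge0.
  - apply: measurable_funS (nonincr_emeas _) => // s t st.
    by apply: le_hc; apply: lvl_ni.
  - apply: measurable_funS (emeasurable_funD (lvl_meas _ _ k0) (lvl_meas _ _ k0)) => //.
  - move=> t; rewrite /= in_itv /= andbT => t0.
    apply: le_trans (hcU2 hb _ _); apply: le_hc => x [Ox hx].
    by case: (hinc t x t0 Ox hx) => ?; [left|right].
rewrite ge0_integralD //; last 4 first.
- by move=> t _; exact: hc_ge0.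
- exact: measurable_funS (lvl_meas _ _ k0).
- by move=> t _; exact: hc_ge0.
- exact: measurable_funS (lvl_meas _ _ k0).
by rewrite !ch_scale // (ge0_muleDr _ (ch_ge0 _ _) (ch_ge0 _ _)).
Qed.

End choq.
Section zero.
Context (R : realType) (n : nat) (beta : R) (hb : 0 < beta).
Local Notation H := (@hcontent R n beta).
Local Notation mu := (@lebesgue_measure R).

Lemma lux0_null (Phi : R -> \bar R) (h : 'rV[R]_n -> R) a l : 0 < l ->
  (forall x y, 0 <= x -> x <= y -> (Phi x <= Phi y)%E) ->
  (forall M : R, exists2 u, 0 < u & (M%:E <= Phi u)%E) ->
  lux beta Phi h a l = 0%E ->
  H [set x | cube a l x /\ h x != 0] = 0%E.
Proof.
move=> l0 mono unb N0.
set Q := cube a l.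
suff Es0 : forall s, 0 < s -> H [set x | Q x /\ s < `|h x|] = 0%E.
  apply/eqP; rewrite eq_le hc_ge0 andbT.
  rewrite -(@hc_bigcup0 R n beta (fun k => [set x | Q x /\ k.+1%:R^-1 < `|h x|])); last first.
    by move=> k; apply: Es0; rewrite invr_gt0.
  apply: le_hc => x [Qx hx0]; exists (Num.trunc (`|h x|^-1)) => //; split => //.
  rewrite -[ltRHS]invrK ltf_pV2 ?posrE ?invr_gt0 ?normr_gt0 //.
  exact: truncnS_gt.
move=> s s0; apply/eqP; rewrite eq_le hc_ge0 andbT.
apply/lee_addgt0Pr => e e0; rewrite add0e.
pose P := powR l beta; have P0 : 0 < P by rewrite powR_gt0.
pose M := P / e; have M0 : 0 < M by rewrite divr_gt0.
have [u u0 Mu] := unb M.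
have : (lux beta Phi h a l < (s / u)%:E)%E by rewrite N0 lte_fin divr_gt0.
move=> /ereal_inf_lt [_ [lam [lam0 adm] <-]]; rewrite lte_fin => lamlt.
set E := [set x | Q x /\ s < `|h x|].
have mk : (M%:E * H E <= choquet beta Q (fun x => Phi (`|h x| / lam)%R))%E.
  rewrite /choquet.
  have mf : measurable_fun [set: R]
      (fun t => H [set x | Q x /\ (t%:E < Phi (`|h x| / lam)%R)%E]).
    apply: nonincr_emeas => t1 t2 t12; apply: le_hc => x [Qx hx]; split => //.
    by apply: le_lt_trans hx; rewrite lee_fin.
  apply: (@le_trans _ _ (\int[mu]_(t in `[0%R, M[) H [set x | Q x /\ (t%:E < Phi (`|h x| / lam)%R)%E])%E); last first.
    apply: ge0_subset_integral => //.
    - exact: measurable_funS mf.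
    - by move=> t _; exact: hc_ge0.
    - by move=> t; rewrite /= !in_itv /= => /andP[->].
  apply: (@le_trans _ _ (\int[mu]_(t in `[0%R, M[) (cst (H E)) t)%E).
    have mM : mu `[0%R, M[%classic = M%:E.
      by rewrite lebesgue_measure_itv /= lte_fin M0 sube0.
    by rewrite integral_cst // -[X in (H E * X)%E]/(mu `[0%R, M[%classic) mM muleC.
  apply: ge0_le_integral => //.
  - by move=> t _; exact: hc_ge0.
  - exact: measurable_funS mf.
  move=> t; rewrite /= in_itv /= => /andP[t0 tM]; apply: le_hc => x [Qx hx].
  split => //; apply: (lt_le_trans _ (le_trans Mu _)); first by rewrite lte_fin.
  apply: mono; first exact: ltW.
  rewrite ler_pdivlMr // (le_trans _ (ltW hx)) //.
  by rewrite -ler_pdivlMl // mulrC ltW.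
have : (choquet beta Q (fun x => Phi (`|h x| / lam)%R) <= P%:E)%E.
  by move: adm; rewrite lee_pdivrMl // mule1.
move=> /(le_trans mk); rewrite -lee_pdivlMl // -EFinM.
by rewrite /M invf_div divfK ?gt_eqF.
Qed.
End zero.
Section young_props.
Context (R : realType) (B : R -> R) (yB : young B).

Lemma young_mono x y : 0 <= x -> x <= y -> ((B x)%:E <= (B y)%:E)%E.
Proof.
case: yB => _ _ _ inc _ x0; rewrite lee_fin le_eqVlt => /predU1P[->//|xy].
exact/ltW/inc.
Qed.

Lemma young_unb (M : R) : exists2 u, 0 < u & (M%:E <= (B u)%:E)%E.
Proof.
case: yB => _ _ _ _ /cvgryPge /(_ M) [M0 [_ HM0]].
exists (`|M0| + 1); first by rewrite ltr_wpDl.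
rewrite lee_fin; apply: HM0.
by rewrite (le_lt_trans (ler_norm M0)) // ltrDl.
Qed.

Lemma compl_mono x y : 0 <= x -> x <= y -> (compl B x <= compl B y)%E.
Proof.
move=> x0 xy; apply: ub_ereal_sup => _ [s s0 <-].
apply: (@le_trans _ _ (s * y - B s)%:E).
  by rewrite lee_fin lerD2r ler_pM2l.
by apply: ereal_sup_ubound; exists s.
Qed.

Lemma compl_ge (s t : R) : 0 < s -> ((s * t - B s)%:E <= compl B t)%E.
Proof. by move=> s0; apply: ereal_sup_ubound; exists s. Qed.

Lemma compl_unb (M : R) : exists2 u, 0 < u & (M%:E <= compl B u)%E.
Proof.
exists (`|M| + `|B 1| + 1); first by rewrite ltr_wpDl.
apply: le_trans (compl_ge _ ltr01); rewrite lee_fin mul1r.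
have := ler_norm M; have := ler_norm (B 1); lra.
Qed.
End young_props.

Section mainpf.
Context (R : realType) (n : nat) (beta : R) (hb : 0 < beta).
Local Notation H := (@hcontent R n beta).

Lemma adm_bound (B : R -> R) (f g : 'rV[R]_n -> R) a l lam mu :
  0 < l -> 0 < lam -> 0 < mu ->
  ((powR l beta)^-1%:E * choquet beta (cube a l) (fun x => (B (`|f x| / lam))%:E) <= 1)%E ->
  ((powR l beta)^-1%:E * choquet beta (cube a l) (fun x => compl B (`|g x| / mu)) <= 1)%E ->
  ((powR l beta)^-1%:E * choquet beta (cube a l) (fun x => (`|f x * g x|)%:E)
     <= (4 * lam * mu)%:E)%E.
Proof.
move=> l0 lam0 mu0 adm1 adm2.
have k0 : 0 < 2 * lam * mu by rewrite !mulr_gt0.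
have L0 : 0 <= (powR l beta)^-1 by rewrite invr_ge0 powR_ge0.
apply: le_trans (lee_wpmul2l _ (@ch_key R n beta hb _ _
   (fun x => (B (`|f x| / lam))%:E) (fun x => compl B (`|g x| / mu)) _ k0 _)) _.
- by rewrite lee_fin.
- move=> t x t0 Qx ht.
  have [h1|h1] := ltP (t / (2 * lam * mu))%:E (B (`|f x| / lam))%:E; first by left.
  have [h2|h2] := ltP (t / (2 * lam * mu))%:E (compl B (`|g x| / mu)); first by right.
  exfalso.
  have fx0 : 0 < `|f x|.
    rewrite normr_gt0; apply/negP => /eqP fx0; move: ht.
    by rewrite fx0 mul0r normr0 lte_fin ltNge t0.
  have := le_trans (compl_ge B (`|g x| / mu) (divr_gt0 fx0 lam0)) h2.
  rewrite !lee_fin in h1 *; move: ht h1; rewrite lte_fin normrM.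
  set F := `|f x|; set G := `|g x|; set T := t / (2 * lam * mu).
  have tT : t = T * 2 * (lam * mu) by rewrite /T; field; rewrite !gt_eqF.
  have FG : F * G = (F / lam * (G / mu)) * (lam * mu) by field; rewrite !gt_eqF.
  rewrite tT FG => ht h1 h3.
  have lm0 : 0 < lam * mu by rewrite mulr_gt0.
  move: ht; apply/negP; rewrite -leNgt ler_pM2r //.
  lra.
rewrite muleCA ge0_muleDr; last 2 first.
- exact: ch_ge0.
- exact: ch_ge0.
apply: le_trans (lee_wpmul2l _ (leeD adm1 adm2)) _; first by rewrite lee_fin ltW.
by rewrite -EFinD -EFinM lee_fin; lra.
Qed.
End mainpf.
Lemma abstract_bound (R : realType) (X Nf Ng : \bar R) (Pf Pg : R -> Prop) :
  Nf = ereal_inf [set lam%:E | lam in Pf] ->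
  Ng = ereal_inf [set lam%:E | lam in Pg] ->
  (forall lam mu, Pf lam -> Pg mu -> (X <= (4 * lam * mu)%:E)%E) ->
  (Nf = 0%E \/ Ng = 0%E -> (X <= 0)%E) ->
  (forall lam, Pf lam -> 0 < lam) -> (forall mu, Pg mu -> 0 < mu) ->
  (X <= 4%:E * Nf * Ng)%E.
Proof.
move=> eNf eNg adm zero_case Pf0 Pg0.
have Nf0 : (0 <= Nf)%E.
  by rewrite eNf; apply: le_ereal_inf_tmp => _ [lam /Pf0 lam0 <-]; rewrite lee_fin ltW.
have Ng0 : (0 <= Ng)%E.
  by rewrite eNg; apply: le_ereal_inf_tmp => _ [lam /Pg0 lam0 <-]; rewrite lee_fin ltW.
have [N0|Nfn0] := eqVneq Nf 0%E.
  by apply: le_trans (zero_case (or_introl N0)) _; rewrite N0 mule0 mul0e.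
have [N0|Ngn0] := eqVneq Ng 0%E.
  by apply: le_trans (zero_case (or_intror N0)) _; rewrite N0 mule0.
have Nfp : (0 < Nf)%E by rewrite lt0e Nfn0 Nf0.
have Ngp : (0 < Ng)%E by rewrite lt0e Ngn0 Ng0.
have [Ninf|Nfy] := eqVneq Nf +oo%E.
  rewrite Ninf (@gt0_muley _ 4%:E); last by rewrite lte_fin.
  by rewrite (gt0_mulye Ngp); exact: leey.
have [Ninf|Ngy] := eqVneq Ng +oo%E.
  rewrite Ninf (@gt0_muley _ (4%:E * Nf)); first exact: leey.
  by apply: mule_gt0; [rewrite lte_fin|exact: Nfp].
have Nfl : (Nf < +oo)%E by rewrite lt_neqAle Nfy leey.
have Ngl : (Ng < +oo)%E by rewrite lt_neqAle Ngy leey.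
have Nff : Nf \is a fin_num by rewrite (ge0_fin_numE Nf0).
have Ngf : Ng \is a fin_num by rewrite (ge0_fin_numE Ng0).
have A0 : 0 < fine Nf by apply: fine_gt0; rewrite Nfp Nfl.
have B0 : 0 < fine Ng by apply: fine_gt0; rewrite Ngp Ngl.
have adhf : forall d, 0 < d -> exists2 lam, Pf lam & lam < fine Nf + d.
  move=> d d0; have := Nff; rewrite eNf => Nff'.
  have [_ [lam Plam <-] lamlt] := lb_ereal_inf_adherent d0 Nff'.
  by exists lam => //; rewrite -lte_fin EFinD fineK // eNf.
have adhg : forall d, 0 < d -> exists2 lam, Pg lam & lam < fine Ng + d.
  move=> d d0; have := Ngf; rewrite eNg => Ngf'.
  have [_ [lam Plam <-] lamlt] := lb_ereal_inf_adherent d0 Ngf'.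
  by exists lam => //; rewrite -lte_fin EFinD fineK // eNg.
rewrite -(fineK Nff) -(fineK Ngf) -!EFinM.
move: (fine Nf) (fine Ng) A0 B0 adhf adhg => A Bb A0 B0 adhf adhg.
apply/lee_addgt0Pr => e e0.
pose d := Num.min 1 (e / (4 * (A + Bb + 1))).
have d0 : 0 < d by rewrite lt_min ltr01 divr_gt0 // mulr_gt0 // addr_gt0 // addr_gt0.
have d1 : d <= 1 by rewrite ge_min lexx.
have de : d * (4 * (A + Bb + 1)) <= e.
  rewrite -ler_pdivlMr ?mulr_gt0 ?addr_gt0 //; by rewrite ge_min lexx orbT.
have [lam Plam lamlt] := adhf d d0.
have [mu Pmu mult] := adhg d d0.
apply: le_trans (adm _ _ Plam Pmu) _.
rewrite -EFinD lee_fin.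
have lam0 := Pf0 _ Plam; have mu0 := Pg0 _ Pmu.
have h1 : lam * mu <= (A + d) * (Bb + d) by rewrite ler_pM // ?ltW.
have h3 : d * (A + Bb + d) <= d * (A + Bb + 1) by rewrite ler_pM2l // lerD2l.
have h2 : (A + d) * (Bb + d) = A * Bb + d * (A + Bb + d) by ring.
lra.
Qed.
Unset Implicit Arguments.

Theorem lemma3p3 (R : realType) (n : nat) (beta : R) :
  0 < beta -> beta <= n%:R ->
  exists C : R, 0 < C /\
    forall (B : R -> R), young B ->
    forall (f g : 'rV[R]_n -> R) (a : 'rV[R]_n) (l : R), 0 < l ->
      ((powR l beta)^-1%:E * choquet beta (cube a l) (fun x => (`|f x * g x|)%R%:E)
        <= C%:E * lux beta (fun t => (B t)%:E) f a l * lux beta (compl B) g a l)%E.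
Proof.
move=> hb _; exists 4; split; first by [].
move=> B yB f g a l l0.
apply: (abstract_bound (erefl _) (erefl _)).
- move=> lam mu [lam0 adm1] [mu0 adm2].
  by apply: (@adm_bound R n beta hb B f g a l lam mu l0 lam0 mu0); [exact: adm1|exact: adm2].
- move=> N0; rewrite /choquet integral0_eq ?mule0 // => t.
  rewrite /= in_itv /= andbT => t0.
  apply/eqP; rewrite eq_le hc_ge0 andbT.
  case: N0 => N0.
  + rewrite -(@lux0_null R n beta _ f a l l0 (fun x y x0 xy => young_mono yB x0 xy)
      (young_unb yB) N0).
    apply: le_hc => x [Qx hx]; split => //; apply/eqP => fx0; move: hx.
    by rewrite fx0 mul0r normr0 lte_fin ltNge t0.
  + rewrite -(@lux0_null R n beta _ g a l l0 (fun x y x0 xy => compl_mono B x0 xy)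
      (compl_unb B) N0).
    apply: le_hc => x [Qx hx]; split => //; apply/eqP => gx0; move: hx.
    by rewrite gx0 mulr0 normr0 lte_fin ltNge t0.
- by move=> lam [].
- by move=> lam [].
Qed.
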